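(* Let $n$ be even, $V=V_1\sqcup V_2$ with $|V_1|=|V_2|=n/2$, and $0\le q<p\le1$ with $p>0$. Consider the complete weighted graph on $V$ with $w(u,v)=p$ for distinct $u,v$ in the same block, $w(u,v)=q$ for $u,v$ in different blocks, and $w(v,v)=0$, and the cost $c(\{A,A^\complement\})=\sum_{u\in A,v\in A^\complement}w(u,v)$. If $\{A,A^\complement\}$ is a local minimum cut, then for each $i\in\{1,2\}$ either $V_i\subseteq A$ or $V_i\subseteq A^\complement$.
   Context: A cut $\{A,A^\complement\}$ of $V$ is a local minimum if moving any single vertex $v\in V$ to the other side (i.e., replacing the cut by $\{A\setminus\{v\},A^\complement\cup\{v\}\}$ if $v\in A$, or by $\{A\cup\{v\},A^\complement\setminus\{v\}\}$ if $v\in A^\complement$) does not decrease the cost. *)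

(* Defs.v *)
From mathcomp Require Import all_boot all_order all_algebra.
Set Implicit Arguments. Unset Strict Implicit. Unset Printing Implicit Defensive.
Import Order.TTheory GRing.Theory Num.Theory.
Local Open Scope ring_scope.

Definition sbm_w (R : numDomainType) (n : nat) (V1 V2 : {set 'I_n}) (p q : R)
  (u v : 'I_n) : R :=
  if u == v then 0
  else if ((u \in V1) && (v \in V1)) || ((u \in V2) && (v \in V2)) then p
  else q.

Definition cut_cost (R : numDomainType) (n : nat) (w : 'I_n -> 'I_n -> R)
  (A : {set 'I_n}) : R :=
  \sum_(u in A) \sum_(v in ~: A) w u v.

Definition move_vertex (n : nat) (A : {set 'I_n}) (v : 'I_n) : {set 'I_n} :=
  if v \in A then A :\ v else v |: A.

Definition local_min_cut (R : numDomainType) (n : nat) (w : 'I_n -> 'I_n -> R)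
  (A : {set 'I_n}) : Prop :=
  forall v : 'I_n, cut_cost w A <= cut_cost w (move_vertex A v).

(* Main.v *)
Require Import Defs.
From mathcomp Require Import all_boot all_order all_algebra.
From mathcomp Require Import lra.
Import Order.TTheory GRing.Theory Num.Theory.
Local Open Scope ring_scope.

Section K.
Variables (R : realFieldType) (n : nat).
Implicit Types (w : 'I_n -> 'I_n -> R) (A : {set 'I_n}).

Lemma cut_del w A v : v \in A ->
  cut_cost w (A :\ v) = cut_cost w A + \sum_(x in A :\ v) w x v
                        - \sum_(y in ~: A) w v y.
Proof.
move=> vA.
have e : ~: (A :\ v) = v |: ~: A.
  by apply/setP => y; rewrite !inE negb_and negbK.
rewrite /cut_cost e (big_setD1 v vA) /=.
have nv : v \notin ~: A by rewrite inE negbK.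
under eq_bigr => x _ do rewrite (big_setU1 _ nv) /=.
rewrite big_split /=.
lra.
Qed.

Lemma cut_add w A u : u \notin A ->
  cut_cost w (u |: A) = cut_cost w A + \sum_(y in ~: A :\ u) w u y
                        - \sum_(x in A) w x u.
Proof.
move=> uA.
have e : ~: (u |: A) = ~: A :\ u.
  by apply/setP => y; rewrite !inE negb_or.
have uC : u \in ~: A by rewrite inE.
rewrite /cut_cost e (big_setU1 _ uA) /=.
under [X in _ = X + _ - _]eq_bigr => x _ do rewrite (big_setD1 u uC) /=.
rewrite big_split /=.
lra.
Qed.

Lemma key w A u v c : local_min_cut w A -> v \in A -> u \notin A ->
  (forall x y, w x y = w y x) -> w u v = c ->
  (forall x, x != u -> x != v -> w x u = w x v) -> 0 < c -> False.
Proof.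
move=> H vA uA sym wuv same c0.
have h1 := H v; rewrite /move_vertex vA cut_del // in h1.
have h2 := H u; rewrite /move_vertex (negbTE uA) cut_add // in h2.
have uC : u \in ~: A by rewrite inE.
rewrite (big_setD1 u uC) /= in h1.
rewrite (big_setD1 v vA) /= in h2.
have E1 : \sum_(y in ~: A :\ u) w v y = \sum_(y in ~: A :\ u) w u y.
  apply: eq_bigr => y; rewrite !inE => /andP [yu yA].
  have yv : y != v by apply: contraNneq yA => ->.
  by rewrite (sym v y) (sym u y) same.
have E2 : \sum_(x in A :\ v) w x u = \sum_(x in A :\ v) w x v.
  apply: eq_bigr => x; rewrite !inE => /andP [xv xA].
  have xu : x != u by apply: contraNneq uA => <-.
  by rewrite same.
rewrite E1 in h1; rewrite E2 in h2.
rewrite (sym v u) wuv in h1; rewrite (sym v u) wuv in h2.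
move: h1 h2; set a := cut_cost w A; set s1 := \sum_(x in A :\ v) _;
  set s2 := \sum_(y in ~: A :\ u) _.
lra.
Qed.

End K.

Theorem lemma5 (R : realFieldType) (n : nat) (V1 V2 : {set 'I_n}) (p q : R)
  (A : {set 'I_n}) :
  ~~ odd n ->
  [disjoint V1 & V2] -> V1 :|: V2 = setT ->
  #|V1| = n./2 -> #|V2| = n./2 ->
  0 <= q -> q < p -> p <= 1 -> 0 < p ->
  local_min_cut (sbm_w V1 V2 p q) A ->
  (V1 \subset A \/ V1 \subset ~: A) /\ (V2 \subset A \/ V2 \subset ~: A).
Proof.
move=> _ dis _ _ _ _ _ _ p0 H.
have sym : forall x y, sbm_w V1 V2 p q x y = sbm_w V1 V2 p q y x.
  move=> x y; rewrite /sbm_w eq_sym.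
  by rewrite (andbC (y \in V1)) (andbC (y \in V2)).
have blk : forall W W' : {set 'I_n}, [disjoint W & W'] \/ [disjoint W' & W] ->
   (forall x y, x \in W -> y \in W -> x != y -> sbm_w V1 V2 p q x y = p) ->
   (forall x u v, u \in W -> v \in W -> x != u -> x != v ->
       sbm_w V1 V2 p q x u = sbm_w V1 V2 p q x v) ->
   W \subset A \/ W \subset ~: A.
  move=> W W' dW hp hs.
  case: (boolP (W \subset A)) => [|/subsetPn [u uW uA]]; first by left.
  right; apply/subsetP => v vW; rewrite inE; apply/negP => vA.
  have uv : u != v by apply: contraNneq uA => ->.
  have K := @key _ _ _ A u v p H vA uA sym (hp u v uW vW uv) (fun x => hs x u v uW vW) p0.
  exact K.
have d1 : forall x, x \in V1 -> x \notin V2.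
  by move=> x xV; move/disjointFr: dis => ->.
have d2 : forall x, x \in V2 -> x \notin V1.
  by move=> x xV; move/disjointFl: dis => ->.
split.
- apply: (blk V1 V2 (or_introl dis)).
  + by move=> x y xV yV xy; rewrite /sbm_w (negbTE xy) xV yV.
  + move=> x u v uV vV xu xv.
    by rewrite /sbm_w (negbTE xu) (negbTE xv) uV vV (negbTE (d1 _ uV)) (negbTE (d1 _ vV)).
- apply: (blk V2 V1 (or_intror dis)).
  + by move=> x y xV yV xy; rewrite /sbm_w (negbTE xy) xV yV orbT.
  + move=> x u v uV vV xu xv.
    by rewrite /sbm_w (negbTE xu) (negbTE xv) uV vV (negbTE (d2 _ uV)) (negbTE (d2 _ vV)).
Qed.
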